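(* Let $P=\forall x_1,\dots,x_n\,\exists y_1(D_1),\dots,y_k(D_k)$ be a prefix, let $G_{\mathrm{syn}}$ be an admissible group w.r.t. $P$, and let $G_{\mathrm{sem}}$ be its associated group. Let $\sigma\in\mathcal A(X)$, $f\in G_{\mathrm{sem}}$, $s\in\mathcal S(P)$ and $i\in\{1,\dots,k\}$ be such that (1) for all $j\in\{1,\dots,k\}$ with $j<i$ or $D_i\not\subseteq D_j$, we have $[y_j]_{\tau_s}=[y_j]_{\tau_{f(s)}}$ for all $\tau\in\mathcal A(X)$ with $\tau|_{D_i}=\sigma|_{D_i}$; (2) for all $g\in G_{\mathrm{syn}}$ and all $\tau\in\mathcal A(X)$, if $\tau|_{D_i}=\sigma|_{D_i}$ then $g(\tau)|_{D_i}=\tau|_{D_i}$. Then there exists an interpretation $s'\in\mathcal S(P)$ such that for every $j\in\{1,\dots,k\}$ and every $\tau\in\mathcal A(X)$: $[y_j]_{\tau_{s'}}=[y_j]_{\tau_s}$ if $j<i$, or if $j\ge i$ and $\tau|_{D_i}\neq\sigma|_{D_i}$; and $[y_j]_{\tau_{s'}}=[y_j]_{\tau_{f(s)}}$ if $j\ge i$ and $\tau|_{D_i}=\sigma|_{D_i}$. Furthermore, there exists $h\in G_{\mathrm{sem}}$ with $h(s)=s'$.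
   Context: $X=\{x_1,\dots,x_n\}$, $Y=\{y_1,\dots,y_k\}$ are finite disjoint sets of propositional variables; $\operatorname{BF}(V)$ the propositional formulas over $V\subseteq X\cup Y$; $\mathcal A(V)$ the assignments $V\to\{\top,\bot\}$; $[\phi]_\sigma$ the truth value; $D_j\subseteq X$. For $\rho\in\mathcal A(X)$ and $D\subseteq X$, $\rho|_D$ is the restriction of $\rho$ to $D$. An interpretation is $s=(s_1,\dots,s_k)$ with $s_j:\{\top,\bot\}^{|D_j|}\to\{\top,\bot\}$; $\mathcal S(P)$ the set of interpretations. For $\tau\in\mathcal A(X)$, $\tau_s\in\mathcal A(X\cup Y)$ equals $\tau$ on $X$ and $\tau_s(y_j)=s_j$ evaluated at $\tau$'s values on $D_j$. For $g:\operatorname{BF}(V)\to\operatorname{BF}(V)$ and $\rho\in\mathcal A(V)$, $g(\rho)(v)=[g(v)]_\rho$; $g$ preserves propositional satisfiability if $[g(\phi)]_\rho=[\phi]_{g(\rho)}$ always. A formula in $\operatorname{BF}(Y)$ depends on $x_i$ if it contains some $y_j$ with $x_i\in D_j$. A bijection $g$ of $\operatorname{BF}(X\cup Y)$ is admissible w.r.t. $P$ if it preserves propositional satisfiability, $g(x_i)\in\operatorname{BF}(X)$, $g(y_j)\in\operatorname{BF}(Y)$, and if $g(y_j)$ depends on $x_i$ then $g^{-1}(x_i)\in\operatorname{BF}(D_j)$. An admissible group is a subgroup of all admissible functions. For admissible $g$ and $\tau\in\mathcal A(X)$, $g(\tau)\in\mathcal A(X)$ is $g(\tau)(x)=[g(x)]_\tau$.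 The associated group of $G_{\mathrm{syn}}$ is the set of all bijections $f:\mathcal S(P)\to\mathcal S(P)$ such that for every $s\in\mathcal S(P)$ and $\tau\in\mathcal A(X)$ there exists $g\in G_{\mathrm{syn}}$ with $g(\tau)_{f(s)}=g(\tau_s)$. *)

(* Defs.v *)
From mathcomp Require Import all_boot.
Set Implicit Arguments. Unset Strict Implicit. Unset Printing Implicit Defensive.

Section Defs.
Variables (n k : nat).

(* variables X ∪ Y : x_i = inl i, y_j = inr j *)
Definition var := ('I_n + 'I_k)%type.

Inductive form : Type :=
| FVar of var
| FTop
| FBot
| FNot of form
| FAnd of form & form
| FOr of form & form.

Fixpoint eval (rho : var -> bool) (phi : form) : bool :=
  match phi with
  | FVar v => rho v
  | FTop => true
  | FBot => false
  | FNot a => ~~ eval rho a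
  | FAnd a b => eval rho a && eval rho b
  | FOr a b => eval rho a || eval rho b
  end.

(* phi ∈ BF(V) for V given by a predicate on variables *)
Fixpoint vars_in (V : var -> bool) (phi : form) : bool :=
  match phi with
  | FVar v => V v
  | FTop | FBot => true
  | FNot a => vars_in V a
  | FAnd a b | FOr a b => vars_in V a && vars_in V b
  end.

Definition isX (v : var) : bool := if v is inl _ then true else false.
Definition isY (v : var) : bool := if v is inr _ then true else false.
Definition inD (A : {set 'I_n}) (v : var) : bool :=
  if v is inl x then x \in A else false.

Variable D : 'I_k -> {set 'I_n}.

(* a formula in BF(Y) depends on x_i if it contains some y_j with x_i ∈ D_j *)
Definition depends (phi : form) (i : 'I_n) : bool :=
  ~~ vars_in (fun v => if v is inr j then i \notin D j else true) phi.

Definition act_asg (g : form -> form) (rho : var -> bool) : var -> bool :=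
  fun v => eval rho (g (FVar v)).

Definition preserves_sat (g : form -> form) : Prop :=
  forall phi rho, eval rho (g phi) = eval (act_asg g rho) phi.

Definition admissible (g : form -> form) : Prop :=
  [/\ bijective g, preserves_sat g,
      (forall i : 'I_n, vars_in isX (g (FVar (inl i)))),
      (forall j : 'I_k, vars_in isY (g (FVar (inr j)))) &
      (forall (i : 'I_n) (j : 'I_k), depends (g (FVar (inr j))) i ->
         forall phi, g phi = FVar (inl i) -> vars_in (inD (D j)) phi)].

Definition admissible_group (G : (form -> form) -> Prop) : Prop :=
  [/\ (forall g, G g -> admissible g),
      G id,
      (forall g1 g2, G g1 -> G g2 -> G (g1 \o g2)) &
      (forall g, G g -> exists2 g', G g' & cancel g g' /\ cancel g' g)].

(* interpretations: s_j : {⊤,⊥}^{D_j} -> {⊤,⊥} *)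
Definition dom (j : 'I_k) := {x : 'I_n | x \in D j}.
Definition interp := forall j : 'I_k, {ffun {ffun dom j -> bool} -> bool}.

Definition restr (tau : 'I_n -> bool) (j : 'I_k) : {ffun dom j -> bool} :=
  [ffun x => tau (val x)].

Definition ext (tau : 'I_n -> bool) (s : interp) : var -> bool :=
  fun v => match v with inl x => tau x | inr j => s j (restr tau j) end.

(* evaluation of a formula (in BF(X)) under tau ∈ A(X); the values given
   to Y-variables are irrelevant for formulas in BF(X) *)
Definition evalX (tau : 'I_n -> bool) (phi : form) : bool :=
  eval (fun v => if v is inl x then tau x else false) phi.

Definition act_X (g : form -> form) (tau : 'I_n -> bool) : 'I_n -> bool :=
  fun x => evalX tau (g (FVar (inl x))).

Definition assoc_group (G : (form -> form) -> Prop) (f : interp -> interp) : Prop :=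
  bijective f /\
  forall (s : interp) (tau : 'I_n -> bool), exists2 g, G g &
    forall v, ext (act_X g tau) (f s) v = act_asg g (ext tau s) v.

Definition agree_on (A : {set 'I_n}) (tau sigma : 'I_n -> bool) : Prop :=
  forall x, x \in A -> tau x = sigma x.

End Defs.

(* Main.v *)
Require Import Defs.
From mathcomp Require Import all_boot.
From Stdlib Require Import Classical FunctionalExtensionality.
Set Implicit Arguments. Unset Strict Implicit.
Lemma eval_X n k (phi : form n k) (r1 r2 : var n k -> bool) :
  vars_in (@isX n k) phi -> (forall x, r1 (inl x) = r2 (inl x)) -> eval r1 phi = eval r2 phi.
Proof.
move=> H E; elim: phi H => /=.
- by case.
- by [].
- by [].
- by move=> a IH h; rewrite IH.
- by move=> a IHa b IHb /andP[ha hb]; rewrite IHa // IHb.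
- by move=> a IHa b IHb /andP[ha hb]; rewrite IHa // IHb.
Qed.

Lemma actX_ext n k (D : 'I_k -> {set 'I_n}) g (tau : 'I_n -> bool) (t : interp D) x :
  admissible D g -> act_X g tau x = act_asg g (ext tau t) (inl x).
Proof.
case=> _ _ hX _ _; rewrite /act_X /evalX /act_asg; apply: eval_X => //.
Qed.

Definition locP n k (D : 'I_k -> {set 'I_n}) (G : (form n k -> form n k) -> Prop)
  (F : interp D -> interp D) :=
  forall t tau, exists2 g, G g & ext (act_X g tau) (F t) = act_asg g (ext tau t).

Lemma act_comp n k (g1 g2 : form n k -> form n k) rho :
  preserves_sat g2 -> act_asg (g2 \o g1) rho = act_asg g1 (act_asg g2 rho).
Proof. by move=> P; apply: functional_extensionality => v; rewrite /act_asg /= P. Qed.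

Lemma locP_comp n k (D : 'I_k -> {set 'I_n}) G F1 F2 :
  admissible_group D G -> locP (D:=D) G F1 -> locP (D:=D) G F2 -> locP (D:=D) G (F1 \o F2).
Proof.
case=> Hadm _ Hc _ P1 P2 t tau.
have [g2 G2 E2] := P2 t tau.
have [g1 G1 E1] := P1 (F2 t) (act_X g2 tau).
exists (g2 \o g1); first exact: Hc.
have Hpres : preserves_sat g2 by case: (Hadm _ G2).
have HX : act_X (g2 \o g1) tau = act_X g1 (act_X g2 tau).
  apply: functional_extensionality => x.
  rewrite (@actX_ext _ _ D _ _ t x (Hadm _ (Hc _ _ G2 G1))) act_comp // -E2.
  by rewrite -(@actX_ext _ _ D _ _ (F2 t) x (Hadm _ G1)).
by rewrite /= HX E1 E2 act_comp.
Qed.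

Lemma locP_id n k (D : 'I_k -> {set 'I_n}) G :
  admissible_group D G -> locP (D:=D) G (@id (interp D)).
Proof. by case=> _ Gid _ _ t tau; exists id. Qed.

Lemma locP_iter n k (D : 'I_k -> {set 'I_n}) G f m :
  admissible_group D G -> locP (D:=D) G f -> locP (D:=D) G (iter m f).
Proof.
move=> HG Pf; elim: m => [|m IH]; first exact: locP_id.
have := locP_comp HG Pf IH; done.
Qed.

Definition enc n k (D : 'I_k -> {set 'I_n}) (t : interp D) :
  {dffun forall j : 'I_k, {ffun {ffun dom D j -> bool} -> bool}} := [ffun j => t j].

Lemma enc_inj n k (D : 'I_k -> {set 'I_n}) : injective (@enc n k D).
Proof.
move=> t1 t2 E; apply: functional_extensionality_dep => j.
have := congr1 (fun e : {dffun forall j : 'I_k, {ffun {ffun dom D j -> bool} -> bool}} => e j) E.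
by rewrite /= /enc !ffunE.
Qed.

Lemma iter_inj T (f : T -> T) m : injective f -> injective (iter m f).
Proof. by move=> fi; elim: m => [|m IH] x y //= /fi /IH. Qed.

Lemma period_aux T (f : T -> T) s a b : injective f -> a < b ->
  iter a f s = iter b f s -> exists m, iter m f (f s) = s.
Proof.
move=> fi lt E'.
exists (b - a).-1.
rewrite -iterSr prednK ?subn_gt0 //.
apply: (@iter_inj _ _ a fi); rewrite -iterD subnKC ?(ltnW lt) //.
Qed.

Lemma periodic n k (D : 'I_k -> {set 'I_n}) (f : interp D -> interp D) s :
  injective f -> exists m, iter m f (f s) = s.
Proof.
move=> fi.
pose T := {dffun forall j : 'I_k, {ffun {ffun dom D j -> bool} -> bool}}.
pose io := fun a : 'I_(#|T|.+1) => enc (iter a f s).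
have : ~ injective io.
  by move=> /leq_card; rewrite card_ord ltnn.
rewrite /injective => Hn.
have [a Ha] := not_all_ex_not _ _ Hn.
have [b Hb] := not_all_ex_not _ _ Ha.
have [E Nab] := imply_to_and _ _ Hb.
have E' : iter a f s = iter b f s by apply: enc_inj.
have Hab : nat_of_ord a != nat_of_ord b by apply/eqP => /val_inj.
case: (ltngtP a b) => h.
- exact: (period_aux fi h E').
- exact: (period_aux fi h (esym E')).
- by rewrite h eqxx in Hab.
Qed.

Lemma actX_id n (tau : 'I_n -> bool) k : act_X (k:=k) id tau = tau.
Proof. by apply: functional_extensionality. Qed.

Theorem lemma6 (n k : nat) (D : 'I_k -> {set 'I_n})
  (Gsyn : (form n k -> form n k) -> Prop)
  (HG : admissible_group D Gsyn)
  (sigma : 'I_n -> bool) (f : interp D -> interp D) (s : interp D) (i : 'I_k)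
  (Hf : assoc_group Gsyn f)
  (H1 : forall j : 'I_k, (j < i)%N \/ ~~ (D i \subset D j) ->
        forall tau : 'I_n -> bool, agree_on (D i) tau sigma ->
        ext tau s (inr j) = ext tau (f s) (inr j))
  (H2 : forall g, Gsyn g -> forall tau : 'I_n -> bool,
        agree_on (D i) tau sigma -> agree_on (D i) (act_X g tau) tau) :
  exists s' : interp D,
    (forall (j : 'I_k) (tau : 'I_n -> bool),
       ((j < i)%N \/ ((i <= j)%N /\ ~ agree_on (D i) tau sigma)) ->
       ext tau s' (inr j) = ext tau s (inr j)) /\
    (forall (j : 'I_k) (tau : 'I_n -> bool),
       (i <= j)%N -> agree_on (D i) tau sigma ->
       ext tau s' (inr j) = ext tau (f s) (inr j)) /\
    (exists2 h, assoc_group Gsyn h & h s = s').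
Proof.
pose s' : interp D := fun j => [ffun a : {ffun dom D j -> bool} =>
  if (i <= j) && (D i \subset D j) &&
     [forall x : dom D j, (val x \in D i) ==> (a x == sigma (val x))]
  then f s j a else s j a].
have agreeP : forall j tau, D i \subset D j -> reflect (agree_on (D i) tau sigma)
   [forall x : dom D j, (val x \in D i) ==> (restr D tau j x == sigma (val x))].
  move=> j tau sub; apply: (iffP forallP).
  - move=> H x xi; have xj : x \in D j := subsetP sub x xi.
    by have := H (exist _ x xj); rewrite /= ffunE /= xi /= => /eqP.
  - by move=> H x; apply/implyP => xi; rewrite ffunE; apply/eqP; apply: H.
have Hs1 : forall (j : 'I_k) (tau : 'I_n -> bool),
       ((j < i)%N \/ ((i <= j)%N /\ ~ agree_on (D i) tau sigma)) ->
       ext tau s' (inr j) = ext tau s (inr j).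
  move=> j tau Hc; rewrite /ext /s' ffunE; case: Hc => [lt | [le na]].
  - by rewrite leqNgt lt.
  - case sub: (D i \subset D j); last by rewrite andbF.
    by case: (agreeP j tau sub) => //; rewrite andbF.
have Hs2 : forall (j : 'I_k) (tau : 'I_n -> bool),
       (i <= j)%N -> agree_on (D i) tau sigma ->
       ext tau s' (inr j) = ext tau (f s) (inr j).
  move=> j tau le ag; rewrite /ext /s' ffunE le /=.
  case sub: (D i \subset D j) => /=.
  - by rewrite (introT (agreeP j tau sub) ag).
  - exact: (H1 j (or_intror (negbT sub)) tau ag).
have Enot : forall tau, ~ agree_on (D i) tau sigma -> ext tau s' = ext tau s.
  move=> tau na; apply: functional_extensionality => -[x|j] //.
  case: (leqP i j) => h; apply: Hs1; [right | left] => //.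
have Eag : forall tau, agree_on (D i) tau sigma -> ext tau s' = ext tau (f s).
  move=> tau ag; apply: functional_extensionality => -[x|j] //.
  case: (leqP i j) => h; first exact: Hs2.
  by rewrite (Hs1 j tau (or_introl h)); apply: H1 => //; left.
have [fbij Hf'] := Hf.
have Pf : locP (D:=D) Gsyn f.
  move=> t tau; have [g Gg E] := Hf' t tau; exists g => //.
  exact: functional_extensionality.
have Gid : Gsyn id by case: HG.
exists s'; split => //; split => //.
pose h t := if enc t == enc s then s' else if enc t == enc s' then s else t.
exists h; last by rewrite /h eqxx.
have hK : cancel h h.
  move=> t; rewrite /h.
  case: (enc t =P enc s) => [/enc_inj -> | ne1].
    by rewrite eqxx; case: (enc s' =P enc s) => [/enc_inj -> | _]; rewrite ?eqxx.
  case: (enc t =P enc s') => [/enc_inj -> | ne2].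
    by rewrite eqxx.
  by move/eqP/negbTE: ne1 => ->; move/eqP/negbTE: ne2 => ->.
split; first by exists h.
move=> t tau; rewrite /h.
case: (enc t =P enc s) => [/enc_inj -> | ne1].
  case: (classic (agree_on (D i) tau sigma)) => ag.
    have [g Gg E] := Pf s tau; exists g => // v.
    have ag' : agree_on (D i) (act_X g tau) sigma.
      by move=> x xi; rewrite (H2 g Gg tau ag x xi); apply: ag.
    by rewrite Eag // E.
  by exists id => // v; rewrite actX_id Enot.
case: (enc t =P enc s') => [/enc_inj -> | ne2].
  case: (classic (agree_on (D i) tau sigma)) => ag.
    have [m Em] := periodic s (bij_inj fbij).
    have [g Gg E] := locP_iter m HG Pf (f s) tau; exists g => // v.
    by rewrite Em in E; rewrite E Eag.
  by exists id => // v; rewrite actX_id Enot.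
by exists id => // v; rewrite actX_id.
Qed.
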